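(* For any input distribution $\mathcal{D}$ and any $n,k\ge1$, $p\in[0,1]$, there exists a deterministic algorithm (which may depend on $\mathcal{D}$) for searching an element $z$, sampled from $\mathcal{D}$, in an unsorted list of length $n$, that runs in $k$ rounds, has success probability at least $p$, and issues at most $np\bigl(1-\frac{k-1}{2k}p\bigr)+1$ comparisons in expectation.
   Context: Unordered search in the comparison model: an array $\vec{x}=(x_1,\ldots,x_n)$ of distinct elements in no particular order and a target $z$ equal to exactly one entry $x_\ell$; $\mathcal{D}$ is a probability distribution over which entry $z$ is. Queries ask ''How is $a$ compared to $b$?'' for $a,b\in\{x_1,\ldots,x_n,z\}$, with answer ''$<$'', ''$=$'' or ''$>$''; the goal is to output $\ell$. An algorithm runs in $k$ rounds if in each of $k$ rounds it submits a set of queries chosen depending only on answers of earlier rounds, then receives all answers. *)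

(* Defs.v *)
From HB Require Import structures.
From mathcomp Require Import all_boot all_order all_algebra.
Set Implicit Arguments. Unset Strict Implicit. Unset Printing Implicit Defensive.
Import Order.TTheory GRing.Theory Num.Theory.

(* The comparable items: [None] is the target z, [Some i] is the entry x_i. *)
Definition item (n : nat) := option 'I_n.

Definition query (n : nat) := (item n * item n)%type.

Definition answer := comparison.

(* A history: the list of completed rounds, each round being the list of
   queries submitted in that round together with their answers. *)
Definition history (n : nat) := seq (seq (query n * answer)).

Record algorithm (n : nat) := Algorithm {
  next_queries : history n -> seq (query n);
  output : history n -> 'I_n
}.

Definition item_val (n : nat) (d : Order.disp_t) (T : orderType d)
  (x : 'I_n -> T) (l : 'I_n) (a : item n) : T :=
  match a with None => x l | Some i => x i end.

Definition answer_of (n : nat) (d : Order.disp_t) (T : orderType d)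
  (x : 'I_n -> T) (l : 'I_n) (q : query n) : answer :=
  let va := item_val x l q.1 in
  let vb := item_val x l q.2 in
  if (va < vb)%O then Lt else if va == vb then Eq else Gt.

Fixpoint run (n : nat) (A : algorithm n) (d : Order.disp_t) (T : orderType d)
  (x : 'I_n -> T) (l : 'I_n) (r : nat) : history n :=
  match r with
  | 0 => [::]
  | r'.+1 =>
      let h := run A x l r' in
      h ++ [:: [seq (q, answer_of x l q) | q <- next_queries A h]]
  end.

Definition result (n : nat) (A : algorithm n) (d : Order.disp_t) (T : orderType d)
  (x : 'I_n -> T) (l : 'I_n) (k : nat) : 'I_n :=
  output A (run A x l k).

Definition cost (n : nat) (A : algorithm n) (d : Order.disp_t) (T : orderType d)
  (x : 'I_n -> T) (l : 'I_n) (k : nat) : nat :=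
  sumn [seq size rd | rd <- run A x l k].

Definition is_distribution (R : realFieldType) (n : nat) (D : 'I_n -> R) : Prop :=
  (forall i, 0 <= D i)%R /\ (\sum_(i < n) D i = 1)%R.

Definition success_prob (R : realFieldType) (n : nat) (D : 'I_n -> R)
  (A : algorithm n) (d : Order.disp_t) (T : orderType d) (x : 'I_n -> T)
  (k : nat) : R :=
  (\sum_(l < n | result A x l k == l) D l)%R.

Definition expected_cost (R : realFieldType) (n : nat) (D : 'I_n -> R)
  (A : algorithm n) (d : Order.disp_t) (T : orderType d) (x : 'I_n -> T)
  (k : nat) : R :=
  (\sum_(l < n) D l * (cost A x l k)%:R)%R.

(* Main.v *)
Require Import Defs.
From HB Require Import structures.
From mathcomp Require Import all_boot all_order all_algebra.
From mathcomp Require Import zify ring lra.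
Import Order.TTheory GRing.Theory Num.Theory.
Set Implicit Arguments. Unset Strict Implicit. Unset Printing Implicit Defensive.

Lemma count_sum n (P : pred 'I_n) : count P (enum 'I_n) = \sum_(u < n) (P u : nat).
Proof.
rewrite -sum1_count big_mkcond /= -big_enum /=.
by apply: eq_bigr => i _; case: (P i).
Qed.

Lemma sum_card n (P : pred 'I_n) : \sum_(u < n) (P u : nat) = #|P|.
Proof.
rewrite -sum1_card.
rewrite [RHS]big_mkcond. apply: eq_bigr => i _. rewrite unfold_in. by case: (P i).
Qed.

Lemma cnt_lt n m : (m <= n)%N -> \sum_(t < n) ((t < m) : nat) = m.
Proof.
move=> mn.
rewrite (eq_bigr (fun t : 'I_n => if t < m then 1 else 0)); last by move=> i _; case: (_ < _).
rewrite -big_mkcond /= -(big_ord_widen n (fun _ => 1%N) mn).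
by rewrite sum1_card card_ord.
Qed.

Lemma cnt_blk n m q a : (0 < q)%N ->
  \sum_(u < n) (((u < m) && (u %/ q == a)) : nat) <= q.
Proof.
move=> q0.
rewrite sum_card.
set A := [pred u : 'I_n | (u < m) && (u %/ q == a)].
have := @leq_card_in _ _ (fun u : 'I_n => Ordinal (ltn_pmod u q0)) A.
rewrite card_ord; apply => u v; rewrite !inE => /andP [_ /eqP hu] /andP [_ /eqP hv] [huv].
apply: val_inj => /=.
by rewrite (divn_eq u q) (divn_eq v q) hu hv huv.
Qed.

Section Cost.
Variables (n m q k : nat).
Hypotheses (q0 : (0 < q)%N) (mqk : (m <= q * k)%N) (mn : (m <= n)%N).

Definition bcnt (r : nat) := count (fun u : 'I_n => (u < m) && (u %/ q == r)) (enum 'I_n).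

Definition Cost (t : nat) :=
  \sum_(rr < k) (if (t < m) && (t %/ q < rr) then 0 else bcnt rr).

Definition hfun (t u : nat) : nat := (u < m) && ~~ ((t < m) && (t %/ q < u %/ q)).

Lemma Cost_alt t : Cost t = \sum_(u < n) hfun t u.
Proof.
rewrite /Cost /bcnt.
rewrite (eq_bigr (fun rr : 'I_k => \sum_(u < n)
   (if (t < m) && (t %/ q < rr) then 0 else ((u < m) && (u %/ q == rr) : nat)))); last first.
  move=> rr _; rewrite count_sum; case: ifP => _ //.
  by rewrite big1.
rewrite exchange_big /=.
apply: eq_bigr => u _.
rewrite /hfun.
case um: (u < m)%N; last first.
  by rewrite big1 // => rr _; case: ifP.
have uk : (u %/ q < k)%N by rewrite ltn_divLR // mulnC; apply: leq_trans um mqk.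
rewrite (bigD1 (Ordinal uk)) //= eqxx big1 ?addn0.
  by case: ifP.
move=> rr /eqP nrr; case: ifP => // _.
case: eqP => // e; exfalso; apply: nrr; apply: val_inj => /=; by rewrite e.
Qed.

Lemma h_sym t u :
  hfun t u + hfun u t + ((t < m) && (u < m) : nat) =
  ((t < m) : nat) + ((u < m) : nat) + (((t < m) && (u < m) && (t %/ q == u %/ q)) : nat).
Proof.
rewrite /hfun.
case: (t < m)%N; case: (u < m)%N => //=.
by case: ltngtP.
Qed.

Lemma Cost_sum :
  (\sum_(t < n) Cost t) * 2 + m * m <= 2 * n * m + m * q.
Proof.
have E : (\sum_(t < n) Cost t) * 2 = \sum_(t < n) \sum_(u < n) (hfun t u + hfun u t).
  rewrite muln2 -addnn.
  rewrite (eq_bigr (fun t : 'I_n => \sum_(u < n) hfun t u)); last by move=> t _; exact: Cost_alt.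
  rewrite [X in _ + X = _](exchange_big) /=.
  by rewrite -big_split /=; apply: eq_bigr => t _; rewrite big_split.
have E2 : \sum_(t < n) \sum_(u < n) ((t < m) && (u < m) : nat) = m * m.
  rewrite (eq_bigr (fun t : 'I_n => ((t < m) : nat) * m)).
    by rewrite -big_distrl /= cnt_lt.
  move=> t _; transitivity (((t < m) : nat) * \sum_(u < n) ((u < m) : nat)); last by rewrite cnt_lt.
  by rewrite big_distrr; apply: eq_bigr => u _ /=; case: (t < m)%N; case: (u < m)%N.
have E3 : \sum_(t < n) \sum_(u < n) (((t < m) : nat) + ((u < m) : nat)) = 2 * n * m.
  rewrite (eq_bigr (fun t : 'I_n => ((t < m) : nat) * n + m)).
    rewrite big_split /= -big_distrl /= cnt_lt // sum_nat_const card_ord; lia.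
  move=> t _; rewrite big_split /= sum_nat_const card_ord cnt_lt //; lia.
have E4 : \sum_(t < n) \sum_(u < n) (((t < m) && (u < m) && (t %/ q == u %/ q)) : nat) <= m * q.
  rewrite (eq_bigr (fun t : 'I_n => ((t < m) : nat) * \sum_(u < n) (((u < m) && (u %/ q == t %/ q)) : nat))); last first.
    move=> t _; rewrite big_distrr; apply: eq_bigr => u _ /=.
    by case: (t < m)%N; rewrite ?mul1n ?mul0n // eq_sym.
  rewrite -[m in m * q](cnt_lt mn) big_distrl /=; apply: leq_sum => t _.
  case: (t < m)%N => /=; last by rewrite mul0n.
  have Hc := @cnt_blk n m q (t %/ q) q0. by rewrite /= !mul1n.
rewrite E -E2 -big_split /=.
rewrite (eq_bigr (fun t : 'I_n => \sum_(u < n) (((t < m) : nat) + ((u < m) : nat) + (((t < m) && (u < m) && (t %/ q == u %/ q)) : nat)))); last first.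
  by move=> t _; rewrite -big_split /=; apply: eq_bigr => u _; rewrite h_sym.
under eq_bigr do rewrite big_split /=. rewrite big_split /= E3 leq_add2l; exact: E4.
Qed.

Lemma Cost_mono t t' : (t <= t')%N -> (Cost t <= Cost t')%N.
Proof.
move=> tt'; apply: leq_sum => rr _.
case: ifP => // Ft; case: ifP => // /andP [t'm t'r].
by rewrite (leq_ltn_trans tt' t'm) (leq_ltn_trans (leq_div2r q tt') t'r) in Ft.
Qed.

End Cost.
Fixpoint found n (h : seq (query n * answer)) : option 'I_n :=
  match h with
  | [::] => None
  | ((_, Some i), Eq) :: _ => Some i
  | _ :: h' => found h'
  end.

Lemma found_cat n (a b : seq (query n * answer)) :
  found (a ++ b) = if found a is Some i then Some i else found b.
Proof.
elim: a => //= [[[a1 [i|]] [||]] a IH] //=.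
Qed.

Definition Qs n (pi : 'I_n -> 'I_n) (m q r : nat) : seq (query n) :=
  [seq (None, Some (pi u)) | u <- [seq u : 'I_n <- enum 'I_n | (u < m) && (u %/ q == r)]].

Definition alg n (pi : 'I_n -> 'I_n) (m q : nat) (dflt : 'I_n) : algorithm n :=
  Algorithm (fun h => if found (flatten h) then [::] else Qs pi m q (size h))
            (fun h => odflt dflt (found (flatten h))).

Section Run.
Variables (n : nat) (pi : 'I_n -> 'I_n) (m q : nat) (dflt : 'I_n).
Hypothesis pi_inj : injective pi.
Variables (d : Order.disp_t) (T : orderType d) (x : 'I_n -> T).
Hypothesis x_inj : injective x.

Lemma found_map l (s : seq 'I_n) :
  found [seq (qq, answer_of x l qq) | qq <- [seq (None, Some i) | i <- s]]
  = if l \in s then Some l else None.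
Proof.
elim: s => //= i s IH.
rewrite /answer_of /= in_cons.
case: (eqVneq i l) => [->|nil] /=.
  by rewrite ltxx eqxx.
have hx : x l != x i by apply: contraNneq nil => /x_inj ->.
rewrite (negbTE hx) /=.
by case: (x l < x i)%O; exact: IH.
Qed.

Lemma run_spec t r :
  size (run (alg pi m q dflt) x (pi t) r) = r /\
  found (flatten (run (alg pi m q dflt) x (pi t) r)) =
    (if (t < m) && (t %/ q < r) then Some (pi t) else None) /\
  cost (alg pi m q dflt) x (pi t) r =
    \sum_(rr < r) (if (t < m) && (t %/ q < rr) then 0
                   else count (fun u : 'I_n => (u < m) && (u %/ q == rr)) (enum 'I_n)).
Proof.
elim: r => [|r [IHs [IHf IHc]]].
  by rewrite /cost /= big_ord0 andbF.
rewrite /cost /= in IHc *.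
set hh := run _ x (pi t) r in IHs IHf IHc *.
rewrite IHf IHs size_cat IHs addn1; split => //.
rewrite flatten_cat found_cat IHf map_cat sumn_cat IHc big_ord_recr /= addn0 cats0.
case Ht: ((t < m) && (t %/ q < r)).
  have -> : (t < m) && (t %/ q < r.+1).
    by move/andP: Ht => [-> h]; rewrite ltnS ltnW.
  by rewrite /= addn0.
rewrite /=.
split; last by rewrite /Qs !size_map size_filter.
rewrite /Qs (_ : [seq _ | _ <- _] = [seq (qq, answer_of x (pi t) qq) | qq <- [seq (None, Some i) | i <- [seq pi u | u <- [seq u : 'I_n <- enum 'I_n | (u < m) && (u %/ q == r)]]]]); last first.
    by rewrite -!map_comp.
  rewrite found_map mem_map // mem_filter mem_enum andbT.
  move: Ht; case: (t < m) => //= Ht; by rewrite ltnS leq_eqVlt Ht orbF.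
Qed.

End Run.
Local Open Scope ring_scope.

Lemma sorted_perm (R : realFieldType) n (D : 'I_n -> R) :
  exists pi : 'I_n -> 'I_n, injective pi /\
    forall t u : 'I_n, (t <= u)%N -> D (pi u) <= D (pi t).
Proof.
set le := fun i j : 'I_n => D j <= D i.
set s := sort le (enum 'I_n).
have Hp : perm_eq s (enum 'I_n) by rewrite /s perm_sort.
have Hs : size s = n by rewrite (perm_size Hp) size_enum_ord.
have Hu : uniq s by rewrite (perm_uniq Hp) enum_uniq.
have Hso : sorted le s.
  apply: sort_sorted => i j; rewrite /le; exact: le_total.
exists (fun t => nth t s t); split.
  move=> t u /eqP; rewrite (set_nth_default t u) ?Hs //.
  by rewrite nth_uniq ?Hs // => /eqP /val_inj.
move=> t u tu.
rewrite (set_nth_default t u) ?Hs //.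
have Htr : transitive le by move=> a b c; rewrite /le => h1 h2; apply: le_trans h2 h1.
have Hre : reflexive le by move=> a; rewrite /le.
have := @sorted_leq_nth _ le Htr Hre t s Hso t u.
by rewrite !inE Hs => /(_ (ltn_ord t) (ltn_ord u) tu).
Qed.

Lemma cheb (R : realFieldType) n (a c : 'I_n -> R) :
  (forall t u : 'I_n, (t <= u)%N -> a u <= a t /\ c t <= c u) ->
  n%:R * (\sum_t a t * c t) <= (\sum_t a t) * (\sum_t c t).
Proof.
move=> H.
have H0 : \sum_t \sum_u (a t - a u) * (c t - c u) <= 0.
  apply: sumr_le0 => t _; apply: sumr_le0 => u _.
  case: (leqP t u) => [tu|/ltnW ut].
    have [h1 h2] := H _ _ tu.
    by rewrite mulr_ge0_le0 // ?subr_ge0 ?subr_le0.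
  have [h1 h2] := H _ _ ut.
  by rewrite mulr_le0_ge0 // ?subr_ge0 ?subr_le0.
set A := \sum_t a t. set C := \sum_t c t. set S := \sum_t a t * c t.
have E1 : forall t : 'I_n, \sum_u (a t - a u) * (c t - c u) =
   n%:R * (a t * c t) + S - a t * C - c t * A.
  move=> t.
  rewrite (eq_bigr (fun u => a t * c t + a u * c u - a t * c u - c t * a u)); last first.
    by move=> u _; ring.
  by rewrite !sumrB big_split /= sumr_const card_ord -!mulr_sumr mulr_natl.
rewrite (eq_bigr _ (fun t _ => E1 t)) !sumrB big_split /= sumr_const card_ord in H0.
rewrite -mulr_natl -mulr_sumr -/S -!mulr_suml -/A -/C in H0.
lra.
Qed.

Lemma exists_m (R : realFieldType) (y : R) (N : nat) :
  0 <= y -> y <= N%:R -> (0 < N)%N ->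
  exists m : nat, (m < N)%N /\ m%:R <= y /\ y <= m%:R + 1.
Proof.
move=> y0; elim: N => // N IH yN _.
case: (posnP N) => [N0|Npos].
  by move: yN; rewrite N0 => yN; exists 0%N; rewrite add0r.
case: (lerP y N%:R) => yN'.
  by have [m [mN h]] := IH yN' Npos; exists m; split => //; apply: ltnW.
exists N; split => //; split; first exact: ltW.
by rewrite -natr1 in yN.
Qed.

Theorem proposition11 (R : realFieldType) (n k : nat) (D : 'I_n -> R) (p : R) :
  (1 <= n)%N -> (1 <= k)%N -> is_distribution D -> 0 <= p <= 1 ->
  exists A : algorithm n,
    forall (d : Order.disp_t) (T : orderType d) (x : 'I_n -> T),
      injective x ->
      p <= success_prob D A x k /\
      expected_cost D A x k <=
        n%:R * p * (1 - (k%:R - 1) / (2 * k%:R) * p) + 1.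
Proof.
move=> n1 k1 [D0 D1] /andP [p0 p1].
have [pi [pi_inj pi_sort]] := sorted_perm D.
have nR : 0 < n%:R :> R by rewrite ltr0n.
have [m [mn [Mx xM]]] : exists m, (m < n)%N /\ m%:R <= n%:R * p /\ n%:R * p <= m%:R + 1.
  apply: exists_m => //; first exact: mulr_ge0.
  by rewrite ler_piMr.
set q := (m %/ k + 1)%N.
have q0 : (0 < q)%N by rewrite /q addn1.
have mqk : (m <= q * k)%N.
  by rewrite /q mulnDl mul1n {1}(divn_eq m k) leq_add2l ltnW // ltn_pmod.
have qk : (q * k <= m + k)%N by rewrite /q mulnDl mul1n leq_add2r leq_trunc_div.
exists (alg pi m q (pi (Ordinal mn))).
move=> d T x xinj.
have RS := @run_spec n pi m q (pi (Ordinal mn)) pi_inj d T x xinj.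
have Hres : forall t : 'I_n, (t <= m)%N -> result (alg pi m q (pi (Ordinal mn))) x (pi t) k = pi t.
  move=> t tm; rewrite /result /=; have [_ [-> _]] := RS t k.
  case: (ltnP t m) => tm' /=.
    by rewrite ifT // ltn_divLR // mulnC (leq_trans tm' mqk).
  have -> : t = Ordinal mn by apply: val_inj => /=; apply/eqP; rewrite eqn_leq tm tm'.
  by [].
have Hcost : forall t : 'I_n, cost (alg pi m q (pi (Ordinal mn))) x (pi t) k = Cost n m q k t.
  by move=> t; have [_ [_ ->]] := RS t k.
have Dsum : \sum_t D (pi t) = 1 by rewrite -D1 [RHS](reindex_inj pi_inj).
split.
  rewrite /success_prob (reindex_inj pi_inj).
  have C := @cheb R n (fun t => D (pi t)) (fun t => ((m < t)%N)%:R).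
  have Cs : \sum_(t < n) (((m < t)%N)%:R : R) = n%:R - m.+1%:R.
    rewrite -natr_sum -natrB //.
    congr (_%:R).
    apply/eqP; rewrite -(eqn_add2r m.+1) subnK //.
    rewrite -[X in (_ + X)%N](cnt_lt mn) -big_split /=.
    rewrite (eq_bigr (fun=> 1%N)); first by rewrite sum_nat_const card_ord muln1.
    by move=> i _; rewrite ltnS; case: leqP.
  set S := \sum_(j | _) _.
  set s := \sum_t D (pi t) * ((m < t)%N)%:R.
  have L : 1 - s <= S.
    rewrite -Dsum /S -sumrB [X in _ <= X]big_mkcond /=; apply: ler_sum => t _.
    case: (leqP t m) => tm.
      have := Hres t tm; rewrite /result /= => ->.
      by rewrite eqxx mulr0 subr0.
    rewrite /= mulr1 subrr; case: ifP => _ //.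
  have C1 : n%:R * s <= n%:R - m.+1%:R.
    have := C _; rewrite Dsum Cs mul1r; apply => t u tu.
    split; first exact: pi_sort.
    rewrite ler_nat; case mt: (m < t)%N => //=.
    by rewrite (leq_trans mt tu).
  have H2 : n%:R * p <= n%:R * (1 - s).
    rewrite mulrBr mulr1; move: C1 xM; rewrite -natr1; lra.
  rewrite ler_pM2l // in H2.
  exact: le_trans H2 L.
rewrite /expected_cost (reindex_inj pi_inj).
rewrite (eq_bigr (fun t => D (pi t) * (Cost n m q k t)%:R)); last by move=> t _; rewrite Hcost.
set E := \sum_t _.
have C2 : n%:R * E <= (\sum_(t < n) Cost n m q k t)%:R.
  have := @cheb R n (fun t => D (pi t)) (fun t => (Cost n m q k t)%:R).
  rewrite Dsum mul1r natr_sum; apply => t u tu; split; first exact: pi_sort.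
  by rewrite ler_nat; apply: Cost_mono.
have CS := Cost_sum q0 mqk (ltnW mn).
move: CS; rewrite -(ler_nat R) !natrD !natrM => CS.
move: qk; rewrite -(ler_nat R) !natrD !natrM => qkR.
have mnR : m%:R < n%:R :> R by rewrite ltr_nat.
set SS := (\sum_(t < n) Cost n m q k t)%:R in C2 CS.
set N := n%:R in nR Mx xM mnR C2 CS qkR *.
set M := m%:R in Mx xM mnR CS qkR *.
set Q := q%:R in CS qkR *.
set K := k%:R in qkR *.
have K1 : 1 <= K by rewrite /K ler1n.
have M0 : 0 <= M by rewrite /M ler0n.
set c := (K - 1) / (2 * K).
have hc : c * (2 * K) = K - 1.
  rewrite /c mulfVK //; apply: lt0r_neq0; lra.
set y := N * p in Mx xM *.
have yN : y <= N by rewrite /y ler_piMr //; lra.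
have h1 : 0 <= (y - M) * ((K - 1) * (2 * N - y - M) + 2 * N).
  apply: mulr_ge0; first lra.
  have : 0 <= (K - 1) * (2 * N - y - M) by apply: mulr_ge0; lra.
  lra.
have h2 : M * (Q * K) <= M * (M + K) by apply: ler_wpM2l.
have h3 : K * (SS * 2 + M * M) <= K * (2 * N * M + M * Q) by apply: ler_wpM2l => //; lra.
have h4 : 0 <= K * (2 * N - M) by apply: mulr_ge0; lra.
have K2 : 0 < 2 * K by lra.
rewrite -(ler_pM2l nR) -(ler_pM2l K2).
have e : 2 * K * (N * (N * p * (1 - c * p) + 1)) = 2 * K * N * y - (K - 1) * (y * y) + 2 * K * N.
  by rewrite -hc /y; ring.
rewrite e.
have : 2 * K * (N * E) <= 2 * K * SS by apply: ler_wpM2l => //; lra.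
nra.
Qed.
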